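(* Let $\mathcal{G}$ be a MAG on vertex set $V$ and $W\subseteq V$. Then $\mathcal{S}(\mathcal{G}_W)\subseteq\mathcal{S}(\mathcal{G})\cap\mathcal{P}(W)$, where $\mathcal{P}(W)$ is the power set of $W$.
   Context: A MAG is an acyclic directed mixed graph (directed and bidirected edges, no directed cycles) with $\mathrm{sib}(v)\cap\mathrm{an}(v)=\emptyset$ for all $v$ and in which every nonadjacent pair is m-separated by some set; induced subgraphs $\mathcal{G}_W$ of MAGs are MAGs. For a MAG $\mathcal{G}$: $\mathrm{barren}(U)=\{u\in U:\mathrm{de}(u)\cap U=\{u\}\}$; a nonempty $H$ is a head if $\mathrm{barren}(H)=H$ and $H$ lies in a single district (bidirected-connected component) of $\mathcal{G}_{\mathrm{an}(H)}$; $\mathrm{tail}(H)=(\mathrm{dis}_{\mathrm{an}(H)}(H)\setminus H)\cup\mathrm{pa}(\mathrm{dis}_{\mathrm{an}(H)}(H))$; the parametrizing sets are $\mathcal{S}(\mathcal{G})=\{H\cup A:H\text{ a head},A\subseteq\mathrm{tail}(H)\}$. $\mathcal{S}(\mathcal{G}_W)$ is the same construction applied to the MAG $\mathcal{G}_W$. *)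

(* Defs.v *)
(* A mixed graph on a finite type V is given by a vertex set
   S : {set V} and two relations d (directed: d x y means x -> y) and
   b (bidirected; symmetrised below).  Only edges between vertices of S count,
   so the induced subgraph G_W is simply (W, d, b). *)
From mathcomp Require Import all_boot.
Set Implicit Arguments. Unset Strict Implicit. Unset Printing Implicit Defensive.

Section MAG.
Variables (V : finType) (S : {set V}) (d b : rel V).

Definition dE : rel V := fun x y => [&& x \in S, y \in S & d x y].
Definition bE : rel V := fun x y => [&& x \in S, y \in S & (b x y || b y x)].

Definition adj (x y : V) : bool := [|| dE x y, dE y x | bE x y].

Definition an (A : {set V}) : {set V} := [set v in S | [exists a in A, connect dE v a]].
Definition de (u : V) : {set V} := [set w in S | connect dE u w].
Definition pa (A : {set V}) : {set V} := [set v in S | [exists a in A, dE v a]].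
Definition sib (v : V) : {set V} := [set w | bE v w].

Definition acyclic : Prop := forall x y, dE x y -> ~~ connect dE y x.
Definition ancestral : Prop := forall v, v \in S -> sib v :&: an [set v] = set0.

Definition arrow_at (u v : V) : bool := dE u v || bE u v.
Definition collider (u v w : V) : bool := arrow_at u v && arrow_at w v.

Definition m_connecting (x y : V) (Z : {set V}) (p : seq V) : Prop :=
  let l := x :: p in
  [/\ uniq l, path adj x p, last x p = y &
      forall i, 0 < i -> i < (size l).-1 ->
        let u := nth x l i.-1 in let v := nth x l i in let w := nth x l i.+1 in
        if collider u v w then v \in an Z else v \notin Z].

Definition m_separated (x y : V) (Z : {set V}) : Prop :=
  forall p : seq V, ~ m_connecting x y Z p.

Definition maximal : Prop :=
  forall x y, x \in S -> y \in S -> x != y -> ~~ adj x y ->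
    exists Z : {set V}, Z \subset S :\: [set x; y] /\ m_separated x y Z.

Definition isMAG : Prop := [/\ acyclic, ancestral & maximal].

Definition barren (U : {set V}) : {set V} := [set u in U | de u :&: U == [set u]].

Definition bIn (A : {set V}) : rel V := fun x y => [&& x \in A, y \in A & bE x y].

Definition dis_in (A H : {set V}) : {set V} :=
  [set v in A | [exists h in H, (h \in A) && connect (bIn A) h v]].

Definition is_head (H : {set V}) : bool :=
  [&& H != set0, H \subset S, barren H == H &
      [exists h0 in H, [forall h in H, connect (bIn (an H)) h0 h]]].

Definition tail (H : {set V}) : {set V} :=
  (dis_in (an H) H :\: H) :|: pa (dis_in (an H) H).

Definition param_sets : {set {set V}} :=
  [set X | [exists H : {set V}, is_head H &&
            [exists A : {set V}, (A \subset tail H) && (X == H :|: A)]]].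

End MAG.

(* Main.v *)
Require Import Defs.
From mathcomp Require Import all_boot.
Set Implicit Arguments. Unset Strict Implicit. Unset Printing Implicit Defensive.

Lemma acyc_anti (V : finType) (d : rel V) w y :
  acyclic [set: V] d -> connect (dE [set: V] d) w y ->
  connect (dE [set: V] d) y w -> y = w.
Proof.
move=> ac /connectP [p pth ->] cyw.
case: p pth cyw => [//|x p] /= /andP [ewx pth] cyw.
have cxw : connect (dE [set: V] d) x w.
  apply: connect_trans cyw; apply/connectP; by exists p.
by move: (ac _ _ ewx); rewrite cxw.
Qed.

Lemma key (V : finType) (d : rel V) (H : {set V}) v :
  acyclic [set: V] d -> v \in H ->
  exists2 h, h \in barren [set: V] d H & connect (dE [set: V] d) v h.
Proof.
move=> ac vH.
pose P w := (w \in H) && connect (dE [set: V] d) v w.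
have Pv : P v by rewrite /P vH connect0.
case: (arg_minnP (fun w => #|de [set: V] d w :&: H|) Pv) => w /andP [wH cvw] wmin.
exists w => //.
rewrite inE wH /=; rewrite eqEsubset; apply/andP; split; last first.
  by rewrite sub1set !inE wH connect0.
apply/subsetP => y; rewrite !inE => /andP [/andP [_ cwy] yH].
apply: contraT => nyw.
have Py : P y by rewrite /P yH (connect_trans cvw cwy).
have := wmin y Py.
rewrite leqNgt => /negP []; rewrite /=.
apply: proper_card; apply/properP; split.
  apply/subsetP => z; rewrite !inE => /andP [/andP [_ cyz] zH].
  by rewrite (connect_trans cwy cyz) zH.
exists w; first by rewrite !inE connect0 wH.
rewrite !inE wH andbT /=; apply/negP => cyw.
by move: nyw; rewrite (acyc_anti ac cwy cyw) eqxx.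
Qed.

Lemma dE_mono (V : finType) (d : rel V) (W : {set V}) x y :
  connect (dE W d) x y -> connect (dE [set: V] d) x y.
Proof.
apply: connect_sub => x' y' e; apply: connect1; move: e.
by rewrite /dE !inE => /and3P [_ _ ->].
Qed.

Lemma bIn_sym (V : finType) (b : rel V) (A : {set V}) :
  symmetric (bIn [set: V] b A).
Proof.
move=> x y; rewrite /bIn /bE !inE /=.
by case: (x \in A); case: (y \in A); case: (b x y); case: (b y x).
Qed.

Theorem corollaryB3 (V : finType) (d b : rel V) (W : {set V}) :
  isMAG [set: V] d b ->
  param_sets W d b \subset param_sets [set: V] d b :&: powerset W.
Proof.
rewrite /isMAG => -[ac _ _].
apply/subsetP => X.
rewrite inE => /existsP [H /andP [hH /existsP [A /andP [sAt /eqP ->]]]].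
move/and4P: hH => [nH sHW _ /existsP [g /andP [gH /forallP gconn]]].
set H' := barren [set: V] d H.
have sHpH : H' \subset H by apply/subsetP => u; rewrite inE => /andP [].
have anW : forall v, v \in an W d H -> v \in an [set: V] d H'.
  move=> v; rewrite !inE => /andP [vW /existsP [a /andP [aH cva]]].
  have [h hB cah] := key ac aH.
  apply/existsP; exists h; rewrite hB /=.
  exact: connect_trans (dE_mono cva) cah.
have bmono : forall x y, bIn W b (an W d H) x y ->
    bIn [set: V] b (an [set: V] d H') x y.
  move=> x y; rewrite /bIn /bE => /and3P [xa ya /and3P [_ _ e]].
  by rewrite (anW _ xa) (anW _ ya) !inE e.
have cmono : forall x y, connect (bIn W b (an W d H)) x y ->
    connect (bIn [set: V] b (an [set: V] d H')) x y.
  move=> x y; apply: connect_sub => x' y' e; apply: connect1; exact: bmono.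
have [h0 h0B _] := key ac gH.
have csym := sym_connect_sym (bIn_sym b (an [set: V] d H')).
have cg : connect (bIn [set: V] b (an [set: V] d H')) h0 g.
  rewrite csym; apply: cmono; have := gconn h0.
  by rewrite (subsetP sHpH _ h0B).
set D' := dis_in [set: V] b (an [set: V] d H') H'.
have disD : forall v, v \in dis_in W b (an W d H) H -> v \in D'.
  move=> v; rewrite inE => /andP [va /existsP [h /and3P [hH ha chv]]].
  rewrite inE (anW _ va) /=; apply/existsP; exists h0.
  rewrite h0B /=; apply/andP; split.
    rewrite inE in_setT /=; apply/existsP; exists h0; by rewrite h0B connect0.
  apply: connect_trans cg _; apply: connect_trans (cmono _ _ chv).
  by apply: cmono; have := gconn h; rewrite hH.
have HD : forall h, h \in H -> h \in dis_in W b (an W d H) H.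
  move=> h hH.
  have ha : h \in an W d H.
    rewrite inE (subsetP sHW _ hH) /=; apply/existsP; exists h; by rewrite hH connect0.
  rewrite inE ha /=; apply/existsP; exists h; by rewrite hH ha connect0.
rewrite inE; apply/andP; split; last first.
  rewrite powersetE; apply/subsetP => x; rewrite inE => /orP [xH|xA].
    exact: (subsetP sHW).
  move: (subsetP sAt _ xA); rewrite /tail inE => /orP [|].
    rewrite inE => /andP [_ xd]; move: xd; rewrite inE => /andP [xa _].
    by move: xa; rewrite inE => /andP [-> _].
  by rewrite inE => /andP [-> _].
rewrite inE; apply/existsP; exists H'.
have hH' : is_head [set: V] d b H'.
  apply/and4P; split.
  - by apply/set0Pn; exists h0.
  - exact: subsetT.
  - apply/eqP/setP => u; apply/idP/idP; first by rewrite inE => /andP [].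
    move=> uB; rewrite inE uB /=.
    move: (uB); rewrite inE => /andP [uH deu]; move/eqP: deu => deu.
    rewrite eqEsubset; apply/andP; split.
      apply/subsetP => y /setIP [yde yH'].
      have : y \in de [set: V] d u :&: H by rewrite inE yde (subsetP sHpH).
      by rewrite deu.
    by rewrite sub1set; apply/setIP; split=> //; rewrite inE in_setT connect0.
  - apply/existsP; exists h0; rewrite h0B /=; apply/forallP => h; apply/implyP => hH'.
    apply: connect_trans cg _; apply: cmono.
    by have := gconn h; rewrite (subsetP sHpH _ hH').
rewrite hH' /=; apply/existsP; exists ((H :|: A) :\: H').
have sHX : H' \subset H :|: A by apply: subset_trans sHpH (subsetUl _ _).
rewrite -{2}(setID (H :|: A) H') (setIidPr sHX) eqxx andbT.
apply/subsetP => x; rewrite inE => /andP [xnH' xX].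
rewrite /tail inE.
move: xX; rewrite inE => /orP [xH|xA].
  by rewrite inE xnH' (disD _ (HD _ xH)).
move: (subsetP sAt _ xA); rewrite /tail inE => /orP [|xpa].
  by rewrite inE => /andP [_ xD]; rewrite inE xnH' (disD _ xD).
move: xpa; rewrite inE => /andP [_ /existsP [a /andP [aD ex]]].
apply/orP; right; rewrite inE in_setT /=; apply/existsP; exists a.
rewrite (disD _ aD) /=; move: ex; rewrite /dE !inE.
by case/and3P.
Qed.
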